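(* Consider the two-dimensional Euler–Poincaré equation $\partial_t\mathbf m=-\mathbf u\cdot\nabla\mathbf m-(\nabla\mathbf u)^T\cdot\mathbf m-\mathbf m\,\mathrm{div}\,\mathbf u$ with $\mathbf m=\mathbf u-\Delta\mathbf u$, restricted to fields depending only on $(x,t)$, so that $\mathbf u(x,t)=\int_{\mathbb R}G(x,y)\mathbf m(y,t)\,dy$ with $G(x,y)=\frac12e^{-|x-y|}$. For the ansatz $$\mathbf m(x,t)=\sum_{i=1}^N\big(p_i(t)\hat{\mathbf x}+v_i(t)\hat{\mathbf y}\big)\delta(x-q_i(t)),$$ both the $x$- and $y$-components of the equation yield the same equation $\dot q_i=\sum_jp_jG(q_i,q_j)$; moreover $\dot v_i=0$, and $(q_i,p_i)$ satisfy Hamilton's canonical equations $\dot q_i=\partial H/\partial p_i$, $\dot p_i=-\partial H/\partial q_i$ with $$H=\frac12\sum_{i,j=1}^N(p_ip_j+v_iv_j)G(q_i,q_j),$$ the $v_i$ being constant parameters. The variables $y_i$ canonically conjugate to $v_i$ ($\{y_i,v_j\}=\delta_{ij}$) satisfy $\dot y_i=\sum_jv_jG(q_i,q_j)=\hat{\mathbf y}\cdot\mathbf u(q_i,t)$.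
   Context: $\hat{\mathbf x},\hat{\mathbf y}$ are the Cartesian unit vectors; solutions are understood in the weak (distributional) sense, with the derivative of $G$ at its kink interpreted as the average of the one-sided limits, consistently with $\partial H/\partial q_i$. The $q_i$ are assumed distinct. *)

(* Defs.v *)
From Stdlib Require Import Reals.
From Coquelicot Require Import Coquelicot.
Open Scope R_scope.

Fixpoint sumN (N : nat) (f : nat -> R) : R :=
  match N with O => 0 | S n => sumN n f + f n end.

(* Green's function of 1 - d^2/dx^2 on R *)
Definition G (x y : R) : R := / 2 * exp (- Rabs (x - y)).

(* dG x y = derivative of G in its first argument; at the kink x = y it is
   the average of the one-sided limits (-1/2 and +1/2), i.e. 0
   (Coquelicot's [sign 0 = 0]). *)
Definition dG (x y : R) : R := - / 2 * sign (x - y) * exp (- Rabs (x - y)).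

(* Ansatz: m = sum_i (p_i xhat + v_i yhat) delta(x - q_i).
   Trajectories are indexed by i < N : q p v : nat -> R -> R. *)

(* pairing <sum_i a_i(t) delta(. - q_i(t)), psi> *)
Definition mpair (N : nat) (a q : nat -> R -> R) (t : R) (psi : R -> R) : R :=
  sumN N (fun i => a i t * psi (q i t)).

(* u = G * m : components u1 (x-component, weights p) and u2 (weights v),
   and their x-derivatives (with the kink convention). *)
Definition ufield (N : nat) (a q : nat -> R -> R) (x t : R) : R :=
  sumN N (fun j => a j t * G x (q j t)).
Definition uxfield (N : nat) (a q : nat -> R -> R) (x t : R) : R :=
  sumN N (fun j => a j t * dG x (q j t)).

Definition dx (phi : R -> R -> R) (x t : R) : R := Derive (fun x' => phi x' t) x.
Definition dt (phi : R -> R -> R) (x t : R) : R := Derive (fun t' => phi x t') t.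

Fixpoint Ck (k : nat) (phi : R -> R -> R) : Prop :=
  match k with
  | O => forall x t, continuity_2d_pt phi x t
  | S k' => (forall x t, ex_derive (fun x' => phi x' t) x /\
                          ex_derive (fun t' => phi x t') t)
            /\ Ck k' (dx phi) /\ Ck k' (dt phi)
  end.

Definition test_function (phi : R -> R -> R) : Prop :=
  (forall k, Ck k phi) /\
  exists M, forall x t, M < Rabs x \/ M < Rabs t -> phi x t = 0.

(* Weak form of the x-component of the reduced Euler-Poincare equation
     d_t m1 = - u1 d_x m1 - (d_x u1) m1 - (d_x u2) m2 - m1 d_x u1,
   paired with phi and integrated in t; the term -u1 d_x m1 is paired as
   <m1, d_x (u1 phi)> = <m1, u1 d_x phi + (d_x u1) phi>. *)
Definition weak_integrand_x (N : nat) (q p v : nat -> R -> R)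
    (phi : R -> R -> R) (t : R) : R :=
  mpair N p q t (fun x => dt phi x t)
  + mpair N p q t (fun x => ufield N p q x t * dx phi x t
                           + uxfield N p q x t * phi x t)
  - mpair N p q t (fun x => uxfield N p q x t * phi x t)
  - mpair N v q t (fun x => uxfield N v q x t * phi x t)
  - mpair N p q t (fun x => uxfield N p q x t * phi x t).

(* y-component:  d_t m2 = - u1 d_x m2 - 0 - m2 d_x u1  (d_y u = 0). *)
Definition weak_integrand_y (N : nat) (q p v : nat -> R -> R)
    (phi : R -> R -> R) (t : R) : R :=
  mpair N v q t (fun x => dt phi x t)
  + mpair N v q t (fun x => ufield N p q x t * dx phi x t
                           + uxfield N p q x t * phi x t)
  - mpair N v q t (fun x => uxfield N p q x t * phi x t).

Definition weak_solution_x (N : nat) (q p v : nat -> R -> R) : Prop :=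
  forall phi, test_function phi ->
  forall T, (forall x t, T < Rabs t -> phi x t = 0) ->
  is_RInt (weak_integrand_x N q p v phi) (- T) T 0.

Definition weak_solution_y (N : nat) (q p v : nat -> R -> R) : Prop :=
  forall phi, test_function phi ->
  forall T, (forall x t, T < Rabs t -> phi x t = 0) ->
  is_RInt (weak_integrand_y N q p v phi) (- T) T 0.

Definition Ham (N : nat) (q p v : nat -> R) : R :=
  / 2 * sumN N (fun i => sumN N (fun j => (p i * p j + v i * v j) * G (q i) (q j))).

Definition upd (f : nat -> R) (i : nat) (x : R) : nat -> R :=
  fun j => if Nat.eqb j i then x else f j.

Definition is_C1 (f : R -> R) : Prop :=
  forall t, ex_derive f t /\ continuous (Derive f) t.

(* Main.v *)
Require Import Defs.
From Stdlib Require Import Reals Lra Lia Factorial.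
From Coquelicot Require Import Coquelicot.
Open Scope R_scope.

Lemma sumN_ext N f g : (forall i, (i < N)%nat -> f i = g i) -> sumN N f = sumN N g.
Proof. induction N; simpl; intros H; [reflexivity|]. rewrite IHN by (intros; apply H; lia). rewrite H by lia. reflexivity. Qed.

Lemma sumN_plus N f g : sumN N (fun i => f i + g i) = sumN N f + sumN N g.
Proof. induction N; simpl; [lra|]. rewrite IHN; lra. Qed.

Lemma sumN_minus N f g : sumN N (fun i => f i - g i) = sumN N f - sumN N g.
Proof. induction N; simpl; [lra|]. rewrite IHN; lra. Qed.

Lemma sumN_scal N c f : sumN N (fun i => c * f i) = c * sumN N f.
Proof. induction N; simpl; [lra|]. rewrite IHN; lra. Qed.

Lemma sumN_zero N f : (forall i, (i < N)%nat -> f i = 0) -> sumN N f = 0.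
Proof. intros H. rewrite (sumN_ext N f (fun _ => 0)) by auto. induction N; simpl; [lra|]. rewrite IHN by (intros; apply H; lia). lra. Qed.

Lemma sumN_delta N i c : (i < N)%nat -> sumN N (fun k => if Nat.eqb k i then c k else 0) = c i.
Proof.
  induction N; intros Hi; [lia|]. simpl.
  destruct (Nat.eq_dec i N) as [->|Hn].
  - rewrite Nat.eqb_refl. rewrite sumN_zero. lra. intros k Hk. destruct (Nat.eqb_spec k N); [lia|auto].
  - rewrite IHN by lia. destruct (Nat.eqb_spec N i); [lia|lra].
Qed.

Lemma is_derive_cst (c x : R) : is_derive (fun _ : R => c) x 0.
Proof. apply is_derive_Reals, derivable_pt_lim_const. Qed.

Lemma is_derive_sumN N (f : nat -> R -> R) df x :
  (forall i, (i < N)%nat -> is_derive (f i) x (df i)) ->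
  is_derive (fun y => sumN N (fun i => f i y)) x (sumN N df).
Proof.
  induction N; intros H; simpl.
  - apply is_derive_cst.
  - apply (is_derive_plus (fun y => sumN N (fun i => f i y)) (f N)).
    apply IHN; intros; apply H; lia. apply H; lia.
Qed.

Lemma continuous_sumN N (f : nat -> R -> R) x :
  (forall i, (i < N)%nat -> continuous (f i) x) ->
  continuous (fun y => sumN N (fun i => f i y)) x.
Proof.
  induction N; intros H; simpl.
  - apply continuous_const.
  - apply (continuous_plus (fun y => sumN N (fun i => f i y)) (f N)).
    apply IHN; intros; apply H; lia. apply H; lia.
Qed.

Lemma is_derive_eq (f : R -> R) (x l l' : R) : is_derive f x l -> l = l' -> is_derive f x l'.
Proof. intros H ->; exact H. Qed.

Lemma G_sym x y : G x y = G y x.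
Proof. unfold G. rewrite Rabs_minus_sym. reflexivity. Qed.

Lemma dG_diag x : dG x x = 0.
Proof. unfold dG. replace (x - x) with 0 by ring. rewrite sign_0. ring. Qed.

Lemma G_deriv1 x y : x <> y -> is_derive (fun z => G z y) x (dG x y).
Proof.
  intros Hxy. unfold G, dG.
  eapply is_derive_eq.
  - apply is_derive_scal.
    apply (is_derive_comp exp (fun z => - Rabs (z - y))).
    + apply is_derive_exp.
    + apply (is_derive_opp (fun z => Rabs (z - y))).
      apply (is_derive_Rabs (fun z => z - y)).
      * apply (is_derive_minus (fun z => z) (fun _ => y)). apply is_derive_id. apply is_derive_cst.
      * lra.
  - simpl. unfold scal, opp, minus, plus, opp, one, zero; simpl. unfold mult; simpl. ring.
Qed.

Lemma G_deriv2 x y : x <> y -> is_derive (fun z => G x z) y (dG y x).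
Proof.
  intros Hxy. apply (is_derive_ext (fun z => G z x)). intros; apply G_sym.
  apply G_deriv1. auto.
Qed.

Lemma upd_same f i x : upd f i x i = x.
Proof. unfold upd. rewrite Nat.eqb_refl. reflexivity. Qed.
Lemma upd_other f i x k : k <> i -> upd f i x k = f k.
Proof. intros H. unfold upd. destruct (Nat.eqb_spec k i); [lia|reflexivity]. Qed.

Lemma ham_deriv_gen N i (W : nat -> nat -> R -> R) (a b : nat -> R) x0 :
  (i < N)%nat ->
  (forall k l, (k < N)%nat -> (l < N)%nat ->
     is_derive (W k l) x0 ((if Nat.eqb k i then a l else 0) + (if Nat.eqb l i then b k else 0))) ->
  is_derive (fun x => / 2 * sumN N (fun k => sumN N (fun l => W k l x))) x0
     (/ 2 * (sumN N a + sumN N b)).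
Proof.
  intros Hi H.
  apply is_derive_scal.
  eapply is_derive_eq.
  - apply (is_derive_sumN N (fun k x => sumN N (fun l => W k l x))).
    intros k Hk. apply (is_derive_sumN N (fun l x => W k l x)). intros l Hl. apply H; auto.
  - rewrite (sumN_ext N _ (fun k => (if Nat.eqb k i then sumN N a else 0) + b k)).
    + rewrite sumN_plus. rewrite (sumN_delta N i (fun _ => sumN N a)) by auto. reflexivity.
    + intros k Hk. rewrite sumN_plus. f_equal.
      * destruct (Nat.eqb k i); [reflexivity|]. apply sumN_zero; auto.
      * apply (sumN_delta N i (fun _ => b k)); auto.
Qed.

Lemma Ham_dq N (q p v : nat -> R) i :
  (i < N)%nat -> (forall j, (j < N)%nat -> j <> i -> q i <> q j) ->
  is_derive (fun x => Ham N (upd q i x) p v) (q i)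
    (sumN N (fun j => (p i * p j + v i * v j) * dG (q i) (q j))).
Proof.
  intros Hi Hd. unfold Ham.
  eapply is_derive_eq.
  - apply (ham_deriv_gen N i (fun k l x => (p k * p l + v k * v l) * G (upd q i x k) (upd q i x l))
           (fun l => (p i * p l + v i * v l) * dG (q i) (q l))
           (fun k => (p k * p i + v k * v i) * dG (q i) (q k))); auto.
    intros k l Hk Hl.
    destruct (Nat.eqb_spec k i) as [->|Hki]; destruct (Nat.eqb_spec l i) as [->|Hli].
    + eapply is_derive_eq.
      apply (is_derive_ext (fun _ => (p i * p i + v i * v i) * G 0 0)).
      intros t. rewrite upd_same. unfold G. replace (t - t) with (0 - 0) by ring. reflexivity.
      apply is_derive_cst. rewrite dG_diag. ring.
    + eapply is_derive_eq.
      apply (is_derive_ext (fun x => (p i * p l + v i * v l) * G x (q l))).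
      intros t. rewrite upd_same, upd_other by auto. reflexivity.
      apply is_derive_scal, G_deriv1. apply Hd; auto. ring.
    + eapply is_derive_eq.
      apply (is_derive_ext (fun x => (p k * p i + v k * v i) * G (q k) x)).
      intros t. rewrite upd_same, upd_other by auto. reflexivity.
      apply is_derive_scal, G_deriv2. intro E. apply (Hd k); auto. ring.
    + eapply is_derive_eq.
      apply (is_derive_ext (fun _ => (p k * p l + v k * v l) * G (q k) (q l))).
      intros t. rewrite !upd_other by auto. reflexivity.
      apply is_derive_cst. ring.
  - rewrite <- sumN_plus.
    rewrite <- (sumN_scal N (/2)).
    apply sumN_ext. intros j Hj. field.
Qed.

Lemma Ham_dp N (q p v : nat -> R) i :
  (i < N)%nat ->
  is_derive (fun x => Ham N q (upd p i x) v) (p i)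
    (sumN N (fun j => p j * G (q i) (q j))).
Proof.
  intros Hi. unfold Ham.
  eapply is_derive_eq.
  - apply (ham_deriv_gen N i (fun k l x => (upd p i x k * upd p i x l + v k * v l) * G (q k) (q l))
           (fun l => p l * G (q i) (q l))
           (fun k => p k * G (q k) (q i))); auto.
    intros k l Hk Hl.
    destruct (Nat.eqb_spec k i) as [->|Hki]; destruct (Nat.eqb_spec l i) as [->|Hli].
    + apply (is_derive_ext (fun x => (x * x + v i * v i) * G (q i) (q i))).
      intros t. rewrite upd_same. reflexivity.
      auto_derive; auto. ring.
    + apply (is_derive_ext (fun x => (x * p l + v i * v l) * G (q i) (q l))).
      intros t. rewrite upd_same, upd_other by auto. reflexivity.
      auto_derive; auto. ring.
    + apply (is_derive_ext (fun x => (p k * x + v k * v i) * G (q k) (q i))).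
      intros t. rewrite upd_same, upd_other by auto. reflexivity.
      auto_derive; auto. ring.
    + eapply is_derive_eq.
      apply (is_derive_ext (fun _ => (p k * p l + v k * v l) * G (q k) (q l))).
      intros t. rewrite !upd_other by auto. reflexivity.
      apply is_derive_cst. ring.
  - rewrite <- sumN_plus.
    rewrite <- (sumN_scal N (/2)).
    apply sumN_ext. intros j Hj. rewrite (G_sym (q j)). field.
Qed.

Lemma Ham_dv N (q p v : nat -> R) i :
  (i < N)%nat ->
  is_derive (fun x => Ham N q p (upd v i x)) (v i)
    (sumN N (fun j => v j * G (q i) (q j))).
Proof.
  intros Hi. unfold Ham.
  eapply is_derive_eq.
  - apply (ham_deriv_gen N i (fun k l x => (p k * p l + upd v i x k * upd v i x l) * G (q k) (q l))
           (fun l => v l * G (q i) (q l))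
           (fun k => v k * G (q k) (q i))); auto.
    intros k l Hk Hl.
    destruct (Nat.eqb_spec k i) as [->|Hki]; destruct (Nat.eqb_spec l i) as [->|Hli].
    + apply (is_derive_ext (fun x => (p i * p i + x * x) * G (q i) (q i))).
      intros t. rewrite upd_same. reflexivity.
      auto_derive; auto. ring.
    + apply (is_derive_ext (fun x => (p i * p l + x * v l) * G (q i) (q l))).
      intros t. rewrite upd_same, upd_other by auto. reflexivity.
      auto_derive; auto. ring.
    + apply (is_derive_ext (fun x => (p k * p i + v k * x) * G (q k) (q i))).
      intros t. rewrite upd_same, upd_other by auto. reflexivity.
      auto_derive; auto. ring.
    + eapply is_derive_eq.
      apply (is_derive_ext (fun _ => (p k * p l + v k * v l) * G (q k) (q l))).
      intros t. rewrite !upd_other by auto. reflexivity.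
      apply is_derive_cst. ring.
  - rewrite <- sumN_plus.
    rewrite <- (sumN_scal N (/2)).
    apply sumN_ext. intros j Hj. rewrite (G_sym (q j)). field.
Qed.

Definition gk (k : nat) (y : R) : R :=
  if Rlt_dec 0 y then (/ y) ^ k * exp (- / y) else 0.

Lemma exp_lower (z : R) (m : nat) : 0 < z ->
  z ^ m * exp (- z) <= INR (fact (S m)) / z.
Proof.
  intros Hz.
  assert (H1 : z ^ (S m) / INR (fact (S m)) <= exp z).
  { eapply Rle_trans; [|apply (exp_ge_taylor z (S m)); lra].
    rewrite tech5.
    assert (0 <= sum_f_R0 (fun k => z ^ k / INR (fact k)) m).
    { apply cond_pos_sum. intros n. apply Rmult_le_pos. apply pow_le; lra.
      apply Rlt_le, Rinv_0_lt_compat, INR_fact_lt_0. }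
    lra. }
  pose proof (INR_fact_lt_0 (S m)) as HF.
  pose proof (exp_pos z) as He.
  rewrite exp_Ropp.
  apply (Rmult_le_reg_r (z * exp z)). nra.
  replace (z ^ m * / exp z * (z * exp z)) with (z ^ S m) by (simpl; field; lra).
  replace (INR (fact (S m)) / z * (z * exp z)) with (INR (fact (S m)) * exp z) by (field; lra).
  apply (Rmult_le_reg_r (/ INR (fact (S m)))). apply Rinv_0_lt_compat; lra.
  replace (INR (fact (S m)) * exp z * / INR (fact (S m))) with (exp z) by (field; lra).
  exact H1.
Qed.

Lemma gk_nonneg k y : 0 <= gk k y.
Proof.
  unfold gk. destruct (Rlt_dec 0 y); [|lra].
  apply Rmult_le_pos. apply pow_le. apply Rlt_le, Rinv_0_lt_compat; lra.
  apply Rlt_le, exp_pos.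
Qed.

Lemma gk_pos k y : 0 < y -> 0 < gk k y.
Proof.
  intros Hy. unfold gk. destruct (Rlt_dec 0 y); [|lra].
  apply Rmult_lt_0_compat. apply pow_lt. apply Rinv_0_lt_compat; lra.
  apply exp_pos.
Qed.

Lemma gk_zero k y : y <= 0 -> gk k y = 0.
Proof. intros Hy. unfold gk. destruct (Rlt_dec 0 y); [lra|reflexivity]. Qed.

Lemma gk_deriv k y : is_derive (gk k) y (- INR k * gk (S k) y + gk (S (S k)) y).
Proof.
  destruct (Rlt_dec 0 y) as [Hy|Hy].
  - apply (is_derive_ext_loc (fun y => (/ y) ^ k * exp (- / y))).
    + exists (mkposreal y Hy). intros t Ht. unfold ball in Ht; simpl in Ht.
      unfold AbsRing_ball, abs, minus, plus, opp in Ht; simpl in Ht.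
      unfold gk. destruct (Rlt_dec 0 t) as [|Hn]; [reflexivity|].
      exfalso. apply Rabs_def2 in Ht. lra.
    + unfold gk. destruct (Rlt_dec 0 y); [|lra].
      auto_derive. repeat split; lra.
      destruct k; simpl; field; lra.
  - destruct (Req_dec y 0) as [->|Hy0].
    + rewrite !gk_zero by lra. replace (- INR k * 0 + 0) with 0 by ring.
      apply is_derive_Reals. intros eps Heps.
      pose proof (INR_fact_lt_0 (S (S k))) as HF.
      assert (Hd : 0 < eps / (INR (fact (S (S k))) + 1)) by (apply Rdiv_lt_0_compat; lra).
      exists (mkposreal _ Hd). intros h Hh0 Hh. cbn [pos] in Hh.
      rewrite Rplus_0_l, (gk_zero k 0) by lra.
      destruct (Rlt_dec 0 h) as [Hp|Hn].
      * unfold gk. destruct (Rlt_dec 0 h); [|lra].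
        pose proof (exp_lower (/ h) (S k) ltac:(apply Rinv_0_lt_compat; lra)) as Hb.
        rewrite Rabs_pos_eq in Hh by lra.
        replace (((/ h) ^ k * exp (- / h) - 0) / h - 0) with ((/ h) ^ S k * exp (- / h)) by (simpl; field; lra).
        rewrite Rabs_pos_eq.
        2: { apply Rmult_le_pos. apply pow_le. apply Rlt_le, Rinv_0_lt_compat; lra. apply Rlt_le, exp_pos. }
        eapply Rle_lt_trans; [exact Hb|].
        set (F := INR (fact (S (S k)))) in *.
        replace (F / / h) with (F * h) by (field; lra).
        apply (Rmult_lt_compat_r (F + 1)) in Hh; [|lra].
        replace (eps / (F + 1) * (F + 1)) with eps in Hh by (field; lra).
        nra.
      * rewrite gk_zero by lra. replace ((0 - 0) / h - 0) with 0 by (field; lra).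
        rewrite Rabs_R0; lra.
    + apply (is_derive_ext_loc (fun _ => 0)).
      * assert (Hy' : 0 < - y) by lra. exists (mkposreal _ Hy'). intros t Ht.
        unfold ball in Ht; simpl in Ht.
        unfold AbsRing_ball, abs, minus, plus, opp in Ht; simpl in Ht.
        apply Rabs_def2 in Ht. rewrite gk_zero by lra. reflexivity.
      * rewrite !gk_zero by lra. replace (- INR k * 0 + 0) with 0 by ring. apply is_derive_cst.
Qed.

Inductive ex := EC (c : R) | EX | EAdd (e1 e2 : ex) | EMul (e1 e2 : ex) | EG (k : nat) (a b : R).

Fixpoint eval (e : ex) (x : R) : R :=
  match e with
  | EC c => c
  | EX => x
  | EAdd e1 e2 => eval e1 x + eval e2 x
  | EMul e1 e2 => eval e1 x * eval e2 x
  | EG k a b => gk k (a * x + b)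
  end.

Fixpoint deriv (e : ex) : ex :=
  match e with
  | EC _ => EC 0
  | EX => EC 1
  | EAdd e1 e2 => EAdd (deriv e1) (deriv e2)
  | EMul e1 e2 => EAdd (EMul (deriv e1) e2) (EMul e1 (deriv e2))
  | EG k a b => EMul (EC a) (EAdd (EMul (EC (- INR k)) (EG (S k) a b)) (EG (S (S k)) a b))
  end.

Lemma eval_deriv e x : is_derive (eval e) x (eval (deriv e) x).
Proof.
  induction e; simpl.
  - apply is_derive_cst.
  - apply is_derive_Reals. apply derivable_pt_lim_id.
  - apply (is_derive_plus (eval e1) (eval e2)); auto.
  - eapply is_derive_eq. apply (is_derive_mult (eval e1) (eval e2)).
    exact IHe1. exact IHe2. intros; apply Rmult_comm. unfold plus, mult; simpl. ring.
  - eapply is_derive_eq.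
    apply (is_derive_comp (gk k) (fun x => a * x + b)). apply gk_deriv.
    apply (is_derive_ext (fun x => a * x + b)); [reflexivity|]. auto_derive; auto.
    unfold scal; simpl; unfold mult; simpl. ring.
Qed.

Lemma Derive_eval e x : Derive (eval e) x = eval (deriv e) x.
Proof. apply is_derive_unique, eval_deriv. Qed.

Lemma continuous_eval e x : continuous (eval e) x.
Proof. apply (ex_derive_continuous (eval e)). eexists. apply eval_deriv. Qed.

Lemma Ck_ext k (f g : R -> R -> R) : (forall x t, f x t = g x t) -> Ck k f -> Ck k g.
Proof.
  revert f g; induction k; intros f g E H; simpl in *.
  - intros x t. apply (continuity_2d_pt_ext f g); auto.
  - destruct H as [H1 [H2 H3]]. split; [|split].
    + intros x t. destruct (H1 x t) as [Ha Hb]. split.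
      apply (ex_derive_ext (fun x' => f x' t)); auto.
      apply (ex_derive_ext (fun t' => f x t')); auto.
    + apply (IHk (dx f)); auto. intros x t. unfold dx. apply Derive_ext; auto.
    + apply (IHk (dt f)); auto. intros x t. unfold dt. apply Derive_ext; auto.
Qed.

Lemma is_derive_mulr (f : R -> R) (x df c : R) : is_derive f x df -> is_derive (fun y => f y * c) x (df * c).
Proof.
  intros H. eapply is_derive_eq. apply (is_derive_ext (fun y => c * f y)).
  intros; apply Rmult_comm. apply is_derive_scal, H. ring.
Qed.

Lemma Ck_prod k : forall e1 e2, Ck k (fun x t => eval e1 x * eval e2 t).
Proof.
  induction k; intros e1 e2; simpl.
  - intros x t. apply continuity_2d_pt_mult.
    + apply (continuity_1d_2d_pt_comp (eval e1) (fun u _ => u)).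
      apply continuity_pt_filterlim, continuous_eval. apply continuity_2d_pt_id1.
    + apply (continuity_1d_2d_pt_comp (eval e2) (fun _ v => v)).
      apply continuity_pt_filterlim, continuous_eval. apply continuity_2d_pt_id2.
  - split; [|split].
    + intros x t. split.
      * eexists. apply (is_derive_mulr (eval e1)). apply eval_deriv.
      * eexists. apply is_derive_scal. apply eval_deriv.
    + apply (Ck_ext k (fun x t => eval (deriv e1) x * eval e2 t)); auto.
      intros x t. unfold dx. symmetry. apply is_derive_unique.
      apply (is_derive_mulr (eval e1)). apply eval_deriv.
    + apply (Ck_ext k (fun x t => eval e1 x * eval (deriv e2) t)); auto.
      intros x t. unfold dt. symmetry. apply is_derive_unique.
      apply is_derive_scal. apply eval_deriv.
Qed.

Lemma test_diff_n n : forall phi, (forall k, Ck k phi) -> forall x y, ex_diff_n phi n x y.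
Proof.
  induction n; intros phi H x y; simpl.
  - split; [|exact I]. exact (H O x y).
  - destruct (H 1%nat) as [H1 _]. split; [exact (H O x y)|].
    split; [apply H1|]. split; [apply H1|]. split.
    + apply (IHn (dx phi)). intros k. exact (proj1 (proj2 (H (S k)))).
    + apply (IHn (dt phi)). intros k. exact (proj2 (proj2 (H (S k)))).
Qed.

Lemma test_differentiable phi x y : (forall k, Ck k phi) ->
  differentiable_pt_lim phi x y (dx phi x y) (dt phi x y).
Proof.
  intros H.
  destruct (Taylor_Lagrange_2d phi 1 x y) as [D [d1 Hd]].
  { exists (mkposreal 1 Rlt_0_1). intros; apply test_diff_n; auto. }
  intros eps.
  assert (He : 0 < eps / (Rabs D + 1)) by (apply Rdiv_lt_0_compat; [apply cond_pos| pose proof (Rabs_pos D); lra]).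
  exists (mkposreal _ (Rmin_pos _ _ (cond_pos d1) He)). simpl. intros u v Hu Hv.
  specialize (Hd u v (Rlt_le_trans _ _ _ Hu (Rmin_l _ _)) (Rlt_le_trans _ _ _ Hv (Rmin_l _ _))).
  unfold DL_pol, differential in Hd. simpl in Hd.
  unfold partial_derive in Hd. simpl in Hd. unfold C in Hd. simpl in Hd.
  unfold dx, dt.
  set (m := Rmax (Rabs (u - x)) (Rabs (v - y))) in *.
  assert (Hm : m < eps / (Rabs D + 1)).
  { unfold m. apply Rmax_lub_lt; [apply (Rlt_le_trans _ _ _ Hu) | apply (Rlt_le_trans _ _ _ Hv)]; apply Rmin_r. }
  assert (Hm0 : 0 <= m) by (unfold m; eapply Rle_trans; [apply Rabs_pos|apply Rmax_l]).
  assert (HB : D * Rmax (Rabs (u - x)) (Rabs (v - y)) ^ 2 <= eps * m).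
  { fold m. simpl. rewrite Rmult_1_r.
    apply Rle_trans with (Rabs D * m * m).
    { rewrite <- Rmult_assoc. apply Rle_trans with (Rabs (D * m * m)). apply Rle_abs.
      rewrite !Rabs_mult, (Rabs_pos_eq m) by nra. lra. }
    pose proof (Rabs_pos D).
    apply (Rmult_lt_compat_r (Rabs D + 1)) in Hm; [|lra].
    replace (eps / (Rabs D + 1) * (Rabs D + 1)) with (pos eps) in Hm by (field; lra).
    nra. }
  eapply Rle_trans; [|exact HB].
  fold m. simpl. rewrite Rmult_1_r.
  replace (Binomial.C 0 0) with 1 in Hd by (unfold Binomial.C; simpl; field).
  replace (Binomial.C 1 0) with 1 in Hd by (unfold Binomial.C; simpl; field).
  replace (Binomial.C 1 1) with 1 in Hd by (unfold Binomial.C; simpl; field).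
  replace (m * (m * 1)) with (m * m) in Hd by ring.
  match type of Hd with Rabs ?a <= _ => replace (phi u v - phi x y - _) with a; [exact Hd|] end.
  field.
Qed.

Lemma cont2_comp (f : R -> R -> R) (a b : R -> R) t0 :
  continuity_2d_pt f (a t0) (b t0) -> continuous a t0 -> continuous b t0 ->
  continuous (fun t => f (a t) (b t)) t0.
Proof.
  intros Hf Ha Hb. apply (continuous_comp_2 a b f); auto.
  apply continuity_2d_pt_filterlim in Hf. exact Hf.
Qed.

Lemma test_chain phi (q : R -> R) t0 dq : (forall k, Ck k phi) ->
  is_derive q t0 dq ->
  is_derive (fun t => phi (q t) t) t0 (dx phi (q t0) t0 * dq + dt phi (q t0) t0).
Proof.
  intros H Hq. apply is_derive_Reals.
  replace (dx phi (q t0) t0 * dq + dt phi (q t0) t0) with (dx phi (q t0) t0 * dq + dt phi (q t0) t0 * 1) by ring.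
  apply (derivable_pt_lim_comp_2d phi q (fun t => t)).
  apply test_differentiable; auto.
  apply is_derive_Reals; auto.
  apply derivable_pt_lim_id.
Qed.

Lemma test_boundary phi T : (forall k, Ck k phi) ->
  (forall x t, T < Rabs t -> phi x t = 0) ->
  forall x s, T <= Rabs s -> phi x s = 0.
Proof.
  intros H HT x s Hs.
  destruct (Rle_lt_or_eq_dec _ _ Hs) as [Hlt|Heq]; [apply HT; auto|].
  destruct (Req_dec (phi x s) 0) as [|Hn]; auto. exfalso.
  assert (He : 0 < Rabs (phi x s)) by (apply Rabs_pos_lt; auto).
  destruct (H O x s (mkposreal _ He)) as [d Hd]. simpl in Hd.
  set (w := if Rle_dec 0 s then s + d / 2 else s - d / 2).
  assert (Hw : T < Rabs w).
  { pose proof (cond_pos d). unfold w. destruct (Rle_dec 0 s).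
    - rewrite Heq, !Rabs_pos_eq by lra. lra.
    - rewrite Heq, !Rabs_left by lra. lra. }
  specialize (Hd x w). rewrite (HT x w Hw) in Hd.
  assert (Rabs (w - s) < d).
  { pose proof (cond_pos d). unfold w. destruct (Rle_dec 0 s).
    - replace (s + d / 2 - s) with (d/2) by ring. rewrite Rabs_pos_eq; lra.
    - replace (s - d / 2 - s) with (-(d/2)) by ring. rewrite Rabs_Ropp, Rabs_pos_eq; lra. }
  replace (x - x) with 0 in Hd by ring. rewrite Rabs_R0 in Hd.
  specialize (Hd (cond_pos d) H0). rewrite Rminus_0_l, Rabs_Ropp in Hd. lra.
Qed.

Lemma C1_cont (f : R -> R) t : is_C1 f -> continuous f t.
Proof. intros H. apply (ex_derive_continuous f). apply H. Qed.

Lemma ftc_F N (a q : nat -> R -> R) phi T :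
  (forall i, (i < N)%nat -> is_C1 (q i)) ->
  (forall i, (i < N)%nat -> is_C1 (a i)) ->
  test_function phi ->
  (forall x t, T < Rabs t -> phi x t = 0) ->
  is_RInt (fun t => sumN N (fun j => Derive (a j) t * phi (q j t) t
       + a j t * (dx phi (q j t) t * Derive (q j) t + dt phi (q j t) t))) (- T) T 0.
Proof.
  intros Hq Ha [Hphi _] HT.
  assert (E : 0 = minus (sumN N (fun j => a j T * phi (q j T) T))
                        (sumN N (fun j => a j (- T) * phi (q j (- T)) (- T)))).
  { rewrite !sumN_zero. unfold minus, plus, opp; simpl; ring.
    intros j _. rewrite (test_boundary phi T Hphi HT); [ring|]. rewrite Rabs_Ropp. apply Rle_abs.
    intros j _. rewrite (test_boundary phi T Hphi HT); [ring|]. apply Rle_abs. }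
  rewrite E.
  apply (is_RInt_derive (fun t => sumN N (fun j => a j t * phi (q j t) t))).
  - intros t _. apply (is_derive_sumN N (fun j t => a j t * phi (q j t) t)).
    intros j Hj. eapply is_derive_eq.
    apply (is_derive_mult (a j) (fun t => phi (q j t) t)).
    apply Derive_correct, (Ha j Hj).
    apply test_chain; auto. apply Derive_correct, (Hq j Hj).
    intros; apply Rmult_comm.
    unfold plus, mult; simpl. ring.
  - intros t _. apply (continuous_sumN N (fun j t => Derive (a j) t * phi (q j t) t
       + a j t * (dx phi (q j t) t * Derive (q j) t + dt phi (q j t) t))).
    intros j Hj.
    destruct (Hphi 1%nat) as [_ [Hx Ht]]. simpl in Hx, Ht.
    apply (continuous_plus (fun t => Derive (a j) t * phi (q j t) t)).
    + apply (continuous_mult (Derive (a j)) (fun t => phi (q j t) t)).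
      apply (Ha j Hj).
      apply (cont2_comp phi (q j) (fun t => t)). apply (Hphi O). apply C1_cont; auto. apply continuous_id.
    + apply (continuous_mult (a j)). apply C1_cont; auto.
      apply (continuous_plus (fun t => dx phi (q j t) t * Derive (q j) t)).
      * apply (continuous_mult (fun t => dx phi (q j t) t)).
        apply (cont2_comp (dx phi) (q j) (fun t => t)). apply Hx. apply C1_cont; auto. apply continuous_id.
        apply (Hq j Hj).
      * apply (cont2_comp (dt phi) (q j) (fun t => t)). apply Ht. apply C1_cont; auto. apply continuous_id.
Qed.

Lemma is_RInt_zero_fun (w : R -> R) a b : (forall t, Rmin a b < t < Rmax a b -> w t = 0) -> is_RInt w a b 0.
Proof.
  intros H. apply (is_RInt_ext (fun _ => 0)). intros; symmetry; auto.
  pose proof (@is_RInt_const R_NormedModule a b 0) as HH.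
  replace (scal (b - a) (0:R_NormedModule)) with 0 in HH by (unfold scal; simpl; unfold mult; simpl; ring).
  exact HH.
Qed.

Lemma pos_int_contra (w : R -> R) T l r : - T < l -> l < r -> r < T ->
  (forall t, continuous w t) -> (forall t, l < t < r -> 0 < w t) ->
  (forall t, t < l \/ r < t -> w t = 0) -> ~ is_RInt w (- T) T 0.
Proof.
  intros H1 H2 H3 Hc Hp Hz HI.
  assert (I1 : is_RInt w (- T) l 0).
  { apply is_RInt_zero_fun. intros t Ht. rewrite Rmin_left, Rmax_right in Ht by lra. apply Hz; lra. }
  assert (I3 : is_RInt w r T 0).
  { apply is_RInt_zero_fun. intros t Ht. rewrite Rmin_left, Rmax_right in Ht by lra. apply Hz; lra. }
  assert (Ex : ex_RInt w l r) by (apply (@ex_RInt_continuous R_CompleteNormedModule); auto).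
  assert (Hlt : RInt (fun _ => 0) l r < RInt w l r).
  { apply RInt_lt; auto. intros; apply continuous_const. }
  rewrite RInt_const in Hlt.
  pose proof (is_RInt_Chasles w _ _ _ _ _ (is_RInt_Chasles w _ _ _ _ _ I1 (RInt_correct w l r Ex)) I3) as HT.
  apply (@is_RInt_unique R_CompleteNormedModule) in HT. apply (@is_RInt_unique R_CompleteNormedModule) in HI. rewrite HI in HT.
  unfold plus in HT; simpl in HT. unfold scal in Hlt; simpl in Hlt; unfold mult in Hlt; simpl in Hlt. lra.
Qed.

Lemma cont_eps (f : R -> R) t0 eps : continuous f t0 -> 0 < eps ->
  exists d, 0 < d /\ forall t, Rabs (t - t0) < d -> Rabs (f t - f t0) < eps.
Proof.
  intros Hc He. apply continuity_pt_filterlim in Hc.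
  destruct (Hc eps He) as [d [Hd H]].
  exists d. split; auto. intros t Ht.
  destruct (Req_dec t t0) as [->|Hn].
  - replace (f t0 - f t0) with 0 by ring. rewrite Rabs_R0; auto.
  - apply (H t). split. split; [exact I|auto]. exact Ht.
Qed.

Lemma finite_min N (P : nat -> R -> Prop) :
  (forall j, (j < N)%nat -> exists r, 0 < r /\ forall r', 0 < r' <= r -> P j r') ->
  exists r, 0 < r /\ forall j, (j < N)%nat -> forall r', 0 < r' <= r -> P j r'.
Proof.
  induction N; intros H.
  - exists 1. split; [lra|]. intros; lia.
  - destruct IHN as [r1 [H1 Hr1]]. intros; apply H; lia.
    destruct (H N) as [r2 [H2 Hr2]]. lia.
    exists (Rmin r1 r2). split. apply Rmin_pos; auto.
    intros j Hj r' Hr'. pose proof (Rmin_l r1 r2). pose proof (Rmin_r r1 r2).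
    destruct (Nat.eq_dec j N) as [->|Hn].
    + apply Hr2; lra.
    + apply Hr1; [lia|lra].
Qed.

Lemma sumN_single N i f : (i < N)%nat -> (forall j, (j < N)%nat -> j <> i -> f j = 0) -> sumN N f = f i.
Proof.
  intros Hi H. rewrite (sumN_ext N f (fun k => if Nat.eqb k i then f k else 0)).
  apply (sumN_delta N i f); auto.
  intros j Hj. destruct (Nat.eqb_spec j i) as [->|Hn]; auto.
Qed.

Definition bump (c r : R) : ex := EMul (EG 0 (/ r) (1 - c / r)) (EG 0 (- / r) (1 + c / r)).

Lemma bump_zero c r x : 0 < r -> r <= Rabs (x - c) -> eval (bump c r) x = 0.
Proof.
  intros Hr Hx. simpl.
  destruct (Rle_dec 0 (x - c)).
  - rewrite Rabs_pos_eq in Hx by lra. rewrite (gk_zero 0 (- / r * x + (1 + c / r))). ring.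
    apply (Rmult_le_reg_r r); auto. replace ((- / r * x + (1 + c / r)) * r) with (r - (x - c)) by (field; lra). lra.
  - rewrite Rabs_left in Hx by lra. rewrite (gk_zero 0 (/ r * x + (1 - c / r))). ring.
    apply (Rmult_le_reg_r r); auto. replace ((/ r * x + (1 - c / r)) * r) with (r + (x - c)) by (field; lra). lra.
Qed.

Lemma bump_pos c r x : 0 < r -> Rabs (x - c) < r -> 0 < eval (bump c r) x.
Proof.
  intros Hr Hx. apply Rabs_def2 in Hx. simpl. apply Rmult_lt_0_compat; apply gk_pos.
  - apply (Rmult_lt_reg_r r); auto. replace ((/ r * x + (1 - c / r)) * r) with (r + (x - c)) by (field; lra). lra.
  - apply (Rmult_lt_reg_r r); auto. replace ((- / r * x + (1 + c / r)) * r) with (r - (x - c)) by (field; lra). lra.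
Qed.

Lemma bump_nonneg c r x : 0 <= eval (bump c r) x.
Proof. simpl. apply Rmult_le_pos; apply gk_nonneg. Qed.

Lemma deriv_zero_out e c r x : 0 < r -> (forall y, r <= Rabs (y - c) -> eval e y = 0) ->
  r < Rabs (x - c) -> eval (deriv e) x = 0.
Proof.
  intros Hr Hz Hx.
  assert (Hd : 0 < Rabs (x - c) - r) by lra.
  assert (is_derive (eval e) x 0).
  { apply (is_derive_ext_loc (fun _ => 0)). exists (mkposreal _ Hd). intros t Ht.
    unfold ball in Ht; simpl in Ht. unfold AbsRing_ball, abs, minus, plus, opp in Ht; simpl in Ht.
    symmetry. apply Hz.
    pose proof (Rabs_triang_inv (x - c) (x - t)). replace (x - c - (x - t)) with (t - c) in H by ring.
    replace (t + - x) with (-(x - t)) in Ht by ring. rewrite Rabs_Ropp in Ht. lra.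
    apply is_derive_cst. }
  pose proof (is_derive_unique _ _ _ H). pose proof (is_derive_unique _ _ _ (eval_deriv e x)).
  congruence.
Qed.

Definition Kfun N (q A B : nat -> R -> R) (phi : R -> R -> R) t :=
  sumN N (fun j => A j t * phi (q j t) t + B j t * dx phi (q j t) t).

Lemma local_zero N (q A B : nat -> R -> R) i t0 e r d0 :
  (i < N)%nat -> 0 < r -> 0 < d0 ->
  (forall j t, (j < N)%nat -> j <> i -> Rabs (t - t0) < d0 -> r < Rabs (q j t - q i t0)) ->
  (forall y, r <= Rabs (y - q i t0) -> eval e y = 0) ->
  (forall t, continuous (fun t => A i t * eval e (q i t) + B i t * eval (deriv e) (q i t)) t) ->
  (forall phi, test_function phi -> forall T, (forall x t, T < Rabs t -> phi x t = 0) ->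
     is_RInt (Kfun N q A B phi) (- T) T 0) ->
  A i t0 * eval e (q i t0) + B i t0 * eval (deriv e) (q i t0) = 0.
Proof.
  intros Hi Hr Hd0 Hsep He Hhc HK.
  set (h := fun t => A i t * eval e (q i t) + B i t * eval (deriv e) (q i t)) in *.
  change (h t0 = 0).
  destruct (Req_dec (h t0) 0) as [|Hn]; auto. exfalso.
  destruct (cont_eps h t0 (Rabs (h t0)) (Hhc t0)) as [d2 [Hd2 Hh2]].
  { apply Rabs_pos_lt; auto. }
  assert (Hsign : forall t, Rabs (t - t0) < d2 -> 0 < h t0 * h t).
  { intros t Ht. specialize (Hh2 t Ht). destruct (Rlt_dec 0 (h t0)).
    - rewrite (Rabs_pos_eq (h t0)) in Hh2 by lra. apply Rabs_def2 in Hh2. nra.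
    - rewrite (Rabs_left (h t0)) in Hh2 by lra. apply Rabs_def2 in Hh2. nra. }
  set (d := Rmin d0 d2).
  assert (Hd : 0 < d) by (apply Rmin_pos; auto).
  pose proof (Rmin_l d0 d2). pose proof (Rmin_r d0 d2). fold d in H, H0.
  set (c := q i t0) in *.
  set (chi := bump t0 d).
  set (phi := fun x t => eval e x * eval chi t).
  set (T := Rabs t0 + d + 1).
  assert (Htest : test_function phi).
  { split. intros k. apply Ck_prod.
    exists (Rmax (Rabs c + r) (Rabs t0 + d)). intros x t [Hx|Ht].
    - unfold phi. rewrite He. ring.
      pose proof (Rabs_triang_inv x c). pose proof (Rmax_l (Rabs c + r) (Rabs t0 + d)). lra.
    - unfold phi, chi. rewrite bump_zero; auto. ring.
      pose proof (Rabs_triang_inv t t0). pose proof (Rmax_r (Rabs c + r) (Rabs t0 + d)). lra. }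
  assert (HT : forall x t, T < Rabs t -> phi x t = 0).
  { intros x t Ht. unfold phi, chi. rewrite bump_zero; auto. ring.
    pose proof (Rabs_triang_inv t t0). unfold T in Ht. lra. }
  specialize (HK phi Htest T HT).
  assert (Hdx : forall x t, dx phi x t = eval (deriv e) x * eval chi t).
  { intros x t. unfold dx, phi. apply is_derive_unique. apply (is_derive_mulr (eval e)). apply eval_deriv. }
  assert (HKe : forall t, Kfun N q A B phi t = eval chi t * h t).
  { intros t. unfold Kfun. rewrite (sumN_ext N _ (fun j => (A j t * eval e (q j t) + B j t * eval (deriv e) (q j t)) * eval chi t)).
    2: { intros j Hj. rewrite Hdx. unfold phi. ring. }
    destruct (Rlt_dec (Rabs (t - t0)) d) as [Hin|Hout].
    - rewrite (sumN_single N i); auto. unfold h. ring.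
      intros j Hj Hji. pose proof (Hsep j t Hj Hji ltac:(lra)).
      rewrite He by lra. rewrite (deriv_zero_out e c r); auto. ring.
    - unfold chi. rewrite bump_zero by lra. rewrite Rmult_0_l. apply sumN_zero. intros; ring. }
  set (w := fun t => h t0 * (eval chi t * h t)).
  assert (HW : is_RInt w (- T) T 0).
  { pose proof (is_RInt_scal _ _ _ (h t0) _ HK) as HS.
    replace (scal (h t0) (0:R_NormedModule)) with 0 in HS by (unfold scal; simpl; unfold mult; simpl; ring).
    apply (is_RInt_ext _ w _ _ _) in HS. exact HS.
    intros t _. unfold w. rewrite <- HKe. reflexivity. }
  apply (pos_int_contra w T (t0 - d) (t0 + d)); auto.
  - unfold T. pose proof (Rle_abs (- t0)). rewrite Rabs_Ropp in H1. lra.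
  - lra.
  - unfold T. pose proof (Rle_abs t0). lra.
  - intros t. unfold w. apply (continuous_mult (fun _ => h t0)). apply continuous_const.
    apply (continuous_mult (eval chi)). apply continuous_eval. apply Hhc.
  - intros t Ht. unfold w.
    assert (Ha : Rabs (t - t0) < d) by (apply Rabs_def1; lra).
    pose proof (bump_pos t0 d t Hd Ha). fold chi in H1.
    pose proof (Hsign t ltac:(lra)). nra.
  - intros t Ht. unfold w, chi. rewrite bump_zero; auto. ring.
    destruct Ht. rewrite Rabs_left; lra. rewrite Rabs_pos_eq; lra.
Qed.

Definition Fprime N (a q : nat -> R -> R) (phi : R -> R -> R) t :=
  sumN N (fun j => Derive (a j) t * phi (q j t) t
       + a j t * (dx phi (q j t) t * Derive (q j) t + dt phi (q j t) t)).

Lemma weak_equiv N (a q A B : nat -> R -> R) (J : (R -> R -> R) -> R -> R) :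
  (forall i, (i < N)%nat -> is_C1 (q i)) ->
  (forall i, (i < N)%nat -> is_C1 (a i)) ->
  (forall t i j, (i < N)%nat -> (j < N)%nat -> i <> j -> q i t <> q j t) ->
  (forall i t, (i < N)%nat -> continuous (A i) t) ->
  (forall i t, (i < N)%nat -> continuous (B i) t) ->
  (forall phi t, J phi t = Fprime N a q phi t + Kfun N q A B phi t) ->
  ((forall phi, test_function phi -> forall T, (forall x t, T < Rabs t -> phi x t = 0) ->
      is_RInt (J phi) (- T) T 0)
   <-> (forall i t, (i < N)%nat -> A i t = 0 /\ B i t = 0)).
Proof.
  intros Hq Ha Hd HA HB HJ. split.
  - intros HW i t0 Hi.
    assert (HK : forall phi, test_function phi -> forall T, (forall x t, T < Rabs t -> phi x t = 0) ->
              is_RInt (Kfun N q A B phi) (- T) T 0).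
    { intros phi Hphi T HT.
      pose proof (is_RInt_minus _ _ _ _ _ _ (HW phi Hphi T HT) (ftc_F N a q phi T Hq Ha Hphi HT)) as HM.
      replace (minus (0:R_NormedModule) 0) with 0 in HM by (unfold minus, plus, opp; simpl; ring).
      apply (is_RInt_ext _ (Kfun N q A B phi) _ _ _) in HM. exact HM.
      intros t _. rewrite HJ. unfold Fprime. unfold minus, plus, opp; simpl. ring. }
    set (c := q i t0).
    destruct (finite_min N (fun j r => j <> i -> 3 * r < Rabs (q j t0 - c))) as [r [Hr Hsep]].
    { intros j Hj. destruct (Nat.eq_dec j i) as [->|Hji].
      - exists 1. split; [lra|]. intros; contradiction.
      - assert (0 < Rabs (q j t0 - c)). { apply Rabs_pos_lt. unfold c. intro E. apply (Hd t0 j i); auto. lra. }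
        exists (Rabs (q j t0 - c) / 4). split; [lra|]. intros r' Hr' _. lra. }
    destruct (finite_min N (fun j d => forall t, Rabs (t - t0) < d -> Rabs (q j t - q j t0) < r)) as [d0 [Hd0 Hcont]].
    { intros j Hj. destruct (cont_eps (q j) t0 r (C1_cont _ _ (Hq j Hj)) Hr) as [d [Hd1 Hd2]].
      exists d. split; auto. intros r' Hr' t Ht. apply Hd2. lra. }
    assert (Hsep2 : forall j t, (j < N)%nat -> j <> i -> Rabs (t - t0) < d0 -> r < Rabs (q j t - q i t0)).
    { intros j t Hj Hji Ht. pose proof (Hsep j Hj r (conj Hr (Rle_refl r)) Hji).
      pose proof (Hcont j Hj d0 (conj Hd0 (Rle_refl d0)) t Ht).
      pose proof (Rabs_triang_inv (q j t0 - c) (q j t0 - q j t)).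
      replace (q j t0 - c - (q j t0 - q j t)) with (q j t - c) in H1 by ring.
      rewrite (Rabs_minus_sym (q j t0) (q j t)) in H1.
      fold c. lra. }
    assert (Hcont_h : forall e t, continuous (fun t => A i t * eval e (q i t) + B i t * eval (deriv e) (q i t)) t).
    { intros e t. apply (continuous_plus (fun t => A i t * eval e (q i t))).
      - apply (continuous_mult (A i)). auto. apply (continuous_comp (q i) (eval e)). apply C1_cont; auto. apply continuous_eval.
      - apply (continuous_mult (B i)). auto. apply (continuous_comp (q i) (eval (deriv e))). apply C1_cont; auto. apply continuous_eval. }
    set (e1 := bump c r).
    set (e2 := EMul (EAdd EX (EC (- c))) e1).
    assert (Hb : 0 < eval e1 c).
    { apply bump_pos; auto. replace (c - c) with 0 by ring. rewrite Rabs_R0; auto. }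
    pose proof (local_zero N q A B i t0 e1 r d0 Hi Hr Hd0 Hsep2
                  (fun y Hy => bump_zero c r y Hr Hy) (Hcont_h e1) HK) as Z1.
    pose proof (local_zero N q A B i t0 e2 r d0 Hi Hr Hd0 Hsep2) as Z2.
    assert (Z2' : A i t0 * eval e2 (q i t0) + B i t0 * eval (deriv e2) (q i t0) = 0).
    { apply Z2; auto. intros y Hy. unfold e2. change (eval (EMul (EAdd EX (EC (- c))) e1) y) with ((y + - c) * eval e1 y). unfold e1. rewrite bump_zero; auto. ring. }
    fold c in Z1, Z2'.
    assert (E2 : eval e2 c = 0) by (unfold e2; simpl eval; ring).
    assert (E2' : eval (deriv e2) c = eval e1 c) by (unfold e2; simpl deriv; simpl eval; ring).
    rewrite E2, E2' in Z2'.
    assert (B i t0 = 0) by nra.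
    split; auto. rewrite H in Z1. nra.
  - intros H phi Hphi T HT.
    apply (is_RInt_ext (Fprime N a q phi)).
    + intros t _. rewrite HJ. unfold Kfun. rewrite sumN_zero. apply eq_sym, Rplus_0_r.
      intros j Hj. destruct (H j t Hj) as [-> ->]. ring.
    + apply ftc_F; auto.
Qed.

Lemma cont_G (f g : R -> R) t : continuous f t -> continuous g t ->
  continuous (fun s => G (f s) (g s)) t.
Proof.
  intros Hf Hg. unfold G.
  apply (continuous_mult (fun _ => / 2)). apply continuous_const.
  apply (continuous_comp (fun s => - Rabs (f s - g s)) exp); [|apply continuous_exp].
  apply (continuous_opp (fun s => Rabs (f s - g s))).
  apply (continuous_comp (fun s => f s - g s) Rabs); [|apply continuous_Rabs].
  apply (continuous_minus f g); auto.
Qed.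

Lemma cont_sign (d : R -> R) t : continuous d t -> d t <> 0 -> continuous (fun s => sign (d s)) t.
Proof.
  intros Hd Hn.
  destruct (cont_eps d t (Rabs (d t)) Hd) as [e [He Hb]]. apply Rabs_pos_lt; auto.
  apply (continuous_ext_loc _ (fun _ => sign (d t))).
  - exists (mkposreal e He). intros y Hy. unfold ball in Hy; simpl in Hy.
    unfold AbsRing_ball, abs, minus, plus, opp in Hy; simpl in Hy.
    specialize (Hb y Hy). destruct (Rlt_dec 0 (d t)).
    + rewrite (Rabs_pos_eq (d t)) in Hb by lra. apply Rabs_def2 in Hb.
      rewrite !sign_eq_1; lra.
    + rewrite (Rabs_left (d t)) in Hb by lra. apply Rabs_def2 in Hb.
      rewrite !sign_eq_m1; lra.
  - apply continuous_const.
Qed.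

Lemma cont_dG (f g : R -> R) t : continuous f t -> continuous g t -> f t <> g t ->
  continuous (fun s => dG (f s) (g s)) t.
Proof.
  intros Hf Hg Hn. unfold dG.
  apply (continuous_mult (fun s => - / 2 * sign (f s - g s))).
  - apply (continuous_mult (fun _ => - / 2)). apply continuous_const.
    apply (cont_sign (fun s => f s - g s)). apply (continuous_minus f g); auto. lra.
  - apply (continuous_comp (fun s => - Rabs (f s - g s)) exp); [|apply continuous_exp].
    apply (continuous_opp (fun s => Rabs (f s - g s))).
    apply (continuous_comp (fun s => f s - g s) Rabs); [|apply continuous_Rabs].
    apply (continuous_minus f g); auto.
Qed.

Lemma uxfield_sum N (q p v : nat -> R -> R) j t :
  sumN N (fun k => (p j t * p k t + v j t * v k t) * dG (q j t) (q k t))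
  = p j t * uxfield N p q (q j t) t + v j t * uxfield N v q (q j t) t.
Proof.
  unfold uxfield. rewrite <- !sumN_scal, <- sumN_plus. apply sumN_ext. intros; ring.
Qed.

Lemma cont_ufield N (q a : nat -> R -> R) i t :
  (forall j, (j < N)%nat -> is_C1 (q j)) -> (forall j, (j < N)%nat -> is_C1 (a j)) -> (i < N)%nat ->
  continuous (fun s => ufield N a q (q i s) s) t.
Proof.
  intros Hq Ha Hi. unfold ufield.
  apply (continuous_sumN N (fun j s => a j s * G (q i s) (q j s))). intros j Hj.
  apply (continuous_mult (a j)). apply C1_cont; auto.
  apply cont_G; apply C1_cont; auto.
Qed.

Lemma cont_B N (q p a : nat -> R -> R) i t :
  (forall j, (j < N)%nat -> is_C1 (q j)) -> (forall j, (j < N)%nat -> is_C1 (p j)) ->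
  (forall j, (j < N)%nat -> is_C1 (a j)) -> (i < N)%nat ->
  continuous (fun s => a i s * (ufield N p q (q i s) s - Derive (q i) s)) t.
Proof.
  intros Hq Hp Ha Hi.
  apply (continuous_mult (a i)). apply C1_cont; auto.
  apply (continuous_minus (fun s => ufield N p q (q i s) s)).
  apply cont_ufield; auto. apply (Hq i Hi).
Qed.

Lemma B_iff (a u d : R) : a * (u - d) = 0 <-> (a <> 0 -> d = u).
Proof.
  split.
  - intros H Ha. apply Rmult_integral in H. destruct H; [contradiction|lra].
  - intros H. destruct (Req_dec a 0) as [->|Hn]. ring. rewrite H by auto. ring.
Qed.

Theorem mainTheorem7 (N : nat) (q p v : nat -> R -> R)
  (hq : forall i, (i < N)%nat -> is_C1 (q i))
  (hp : forall i, (i < N)%nat -> is_C1 (p i))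
  (hv : forall i, (i < N)%nat -> is_C1 (v i))
  (hdist : forall t i j, (i < N)%nat -> (j < N)%nat -> i <> j -> q i t <> q j t) :
  (* x-component of the weak equation *)
  (weak_solution_x N q p v <->
     forall i t, (i < N)%nat ->
       Derive (p i) t
         = - sumN N (fun j => (p i t * p j t + v i t * v j t) * dG (q i t) (q j t))
       /\ (p i t <> 0 -> Derive (q i) t = sumN N (fun j => p j t * G (q i t) (q j t))))
  /\
  (* y-component of the weak equation: same equation for q_i, and v_i constant *)
  (weak_solution_y N q p v <->
     forall i t, (i < N)%nat ->
       Derive (v i) t = 0
       /\ (v i t <> 0 -> Derive (q i) t = sumN N (fun j => p j t * G (q i t) (q j t))))
  /\
  (* Hamiltonian structure *)
  (forall i t, (i < N)%nat ->
     let qt := fun j => q j t in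
     let pt := fun j => p j t in
     let vt := fun j => v j t in
     is_derive (fun x => Ham N (upd qt i x) pt vt) (q i t)
       (sumN N (fun j => (p i t * p j t + v i t * v j t) * dG (q i t) (q j t)))
     /\ is_derive (fun x => Ham N qt (upd pt i x) vt) (p i t)
          (sumN N (fun j => p j t * G (q i t) (q j t)))
     /\ sumN N (fun j => p j t * G (q i t) (q j t)) = ufield N p q (q i t) t
     /\ is_derive (fun x => Ham N qt pt (upd vt i x)) (v i t)
          (sumN N (fun j => v j t * G (q i t) (q j t)))
     /\ sumN N (fun j => v j t * G (q i t) (q j t)) = ufield N v q (q i t) t).
Proof.
  split; [|split].
  - unfold weak_solution_x.
    rewrite (weak_equiv N p q
      (fun j t => - (Derive (p j) t + sumN N (fun k => (p j t * p k t + v j t * v k t) * dG (q j t) (q k t))))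
      (fun j t => p j t * (ufield N p q (q j t) t - Derive (q j) t))
      (fun phi => weak_integrand_x N q p v phi)); auto.
    + split; intros H i t Hi; destruct (H i t Hi) as [H1 H2]; split.
      * lra.
      * exact (proj1 (B_iff _ _ _) H2).
      * lra.
      * apply (proj2 (B_iff _ _ _)). exact H2.
    + intros i t Hi. apply (continuous_opp (fun t => Derive (p i) t + sumN N (fun k => (p i t * p k t + v i t * v k t) * dG (q i t) (q k t)))).
      apply (continuous_plus (Derive (p i))). apply (hp i Hi).
      apply (continuous_sumN N (fun k t => (p i t * p k t + v i t * v k t) * dG (q i t) (q k t))).
      intros k Hk. apply (continuous_mult (fun t => p i t * p k t + v i t * v k t)).
      * apply (continuous_plus (fun t => p i t * p k t)).
        apply (continuous_mult (p i)); apply C1_cont; auto.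
        apply (continuous_mult (v i)); apply C1_cont; auto.
      * destruct (Nat.eq_dec k i) as [->|Hki].
        -- apply (continuous_ext (fun _ => 0)). intros; rewrite dG_diag; reflexivity. apply continuous_const.
        -- apply cont_dG; try apply C1_cont; auto.
    + intros i t Hi. apply cont_B; auto.
    + intros phi t. unfold weak_integrand_x, mpair, Fprime, Kfun.
      rewrite <- !sumN_plus, <- !sumN_minus. apply sumN_ext. intros j Hj.
      rewrite uxfield_sum. ring.
  - unfold weak_solution_y.
    rewrite (weak_equiv N v q
      (fun j t => - Derive (v j) t)
      (fun j t => v j t * (ufield N p q (q j t) t - Derive (q j) t))
      (fun phi => weak_integrand_y N q p v phi)); auto.
    + split; intros H i t Hi; destruct (H i t Hi) as [H1 H2]; split.
      * lra.
      * exact (proj1 (B_iff _ _ _) H2).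
      * lra.
      * apply (proj2 (B_iff _ _ _)). exact H2.
    + intros i t Hi. apply (continuous_opp (Derive (v i))). apply (hv i Hi).
    + intros i t Hi. apply cont_B; auto.
    + intros phi t. unfold weak_integrand_y, mpair, Fprime, Kfun.
      rewrite <- !sumN_plus, <- !sumN_minus. apply sumN_ext. intros j Hj.
      ring.
  - intros i t Hi qt pt vt.
    split; [|split; [|split; [|split]]].
    + apply (Ham_dq N qt pt vt i Hi). intros j Hj Hji. apply hdist; auto.
    + apply (Ham_dp N qt pt vt i Hi).
    + reflexivity.
    + apply (Ham_dv N qt pt vt i Hi).
    + reflexivity.
Qed.
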